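(* Let $T\in\mathbb{T}$. (a) Let $v_1,\dots,v_k$ be the non-pendant vertices of $T$, with $v_i$ adjacent to exactly $t_i$ pendant vertices. Then the degree of $v_i$ in $T^{\#}$ is $t_i$. (b) If $T$ is neither a star nor a corona tree, then $T^{\#}$ contains at least one cycle of length $4$.
   Context: $\mathbb{T}$ is the class of simple undirected weighted trees $T$ (nonzero real weights on edges) such that (i) $T$ has at least one non-pendant vertex, and (ii) every non-pendant vertex of $T$ is adjacent to at least one pendant vertex (a vertex of degree one). The adjacency matrix $A$ of $T$ has $(i,j)$ entry equal to the weight of edge $v_iv_j$, or $0$ if no edge; $A^{\#}$ is its group inverse (unique $X$ with $AXA=A$, $XAX=X$, $AX=XA$); $T^{\#}$ is the weighted graph on the vertex set of $T$ with $v_iv_j$ an edge iff $(A^{\#})_{ij}\neq 0$, weighted by that entry. A corona tree is a tree obtained from some tree by attaching one new pendant vertex to each of its vertices. *)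

(* Defs.v *)
From HB Require Import structures.
From mathcomp Require Import all_boot all_order all_algebra.
Set Implicit Arguments. Unset Strict Implicit. Unset Printing Implicit Defensive.
Import Order.TTheory GRing.Theory Num.Theory.
Local Open Scope ring_scope.

Definition adjm (R : ringType) (n : nat) (M : 'M[R]_n) : rel 'I_n :=
  fun i j => (i != j) && (M i j != 0).

Definition deg (T : finType) (e : rel T) (v : T) : nat := #|[set u | e v u]|.

Definition pendant (T : finType) (e : rel T) (v : T) : bool := deg e v == 1%N.

Definition acyclic (T : finType) (e : rel T) : Prop :=
  forall s : seq T, (2 < size s)%N -> uniq s -> ~~ cycle e s.

Definition has_cycle4 (T : finType) (e : rel T) : Prop :=
  exists s : seq T, [/\ size s = 4%N, uniq s & cycle e s].

(* A is the adjacency matrix of a simple undirected weighted tree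
   (nonzero weights on edges, zero off edges) *)
Definition weighted_tree (R : ringType) (n : nat) (A : 'M[R]_n) : Prop :=
  [/\ A^T = A, (forall i, A i i = 0),
      (forall i j, connect (adjm A) i j) & acyclic (adjm A)].

Definition in_class_T (R : ringType) (n : nat) (A : 'M[R]_n) : Prop :=
  [/\ weighted_tree A,
      (exists v, ~~ pendant (adjm A) v) &
      (forall v, ~~ pendant (adjm A) v ->
         exists u, adjm A v u && pendant (adjm A) u)].

Definition is_group_inverse (R : ringType) (n : nat) (A X : 'M[R]_n) : Prop :=
  [/\ A *m X *m A = A, X *m A *m X = X & A *m X = X *m A].

Definition is_star (R : ringType) (n : nat) (A : 'M[R]_n) : Prop :=
  exists c : 'I_n, forall v, v != c -> adjm A c v.

(* corona tree: there is a nonempty set H of vertices (the original tree)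
   such that every vertex outside H is pendant with its neighbour in H, and
   every vertex of H has exactly one neighbour outside H. *)
Definition is_corona (R : ringType) (n : nat) (A : 'M[R]_n) : Prop :=
  exists H : {set 'I_n},
    [/\ H != set0,
        (forall v, v \notin H ->
           pendant (adjm A) v /\ (forall u, adjm A v u -> u \in H)) &
        (forall u, u \in H -> #|[set v | adjm A u v & v \notin H]| = 1%N)].

(* Main.v *)
Require Import Defs.
From HB Require Import structures.
From mathcomp Require Import all_boot all_order all_algebra.
Set Implicit Arguments. Unset Strict Implicit. Unset Printing Implicit Defensive.
Import Order.TTheory GRing.Theory Num.Theory.
Local Open Scope ring_scope.

Lemma closed_connect_lem (T : finType) (e : rel T) (S : pred T) x y :
  (forall a b, S a -> e a b -> S b) -> S x -> connect e x y -> S y.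
Proof.
move=> cl Sx /connectP [s pth ->]; elim: s x Sx pth => //= a s IH x Sx /andP [exa pth].
exact: IH (cl x a Sx exa) pth.
Qed.

Lemma alg_ginv (R : comNzRingType) n (A M B S I : 'M[R]_n) :
  A = M + B + B^T -> M^T = M -> I^T = I ->
  M *m S^T = 0 -> B *m S = 0 -> B^T *m S^T = 0 -> S *m I = 0 ->
  S *m M = 0 -> S *m B = 0 -> I *m B^T = 0 -> S^T *m B^T = 0 ->
  I *m M = M -> I *m B = B -> I *m S = S -> B^T *m I = B^T -> S^T *m I = S^T ->
  B *m S^T = I -> S *m B^T = I -> S^T *m B = B^T *m S ->
  is_group_inverse A (S + S^T - S^T *m M *m S).
Proof.
move=> -> Ms Is z1 z2 z3 z4 z5 z6 z7 z8 i1 i2 i3 i4 i5 e1 e2 e3.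
set Y := S + S^T - S^T *m M *m S.
have AY : (M + B + B^T) *m Y = I + B^T *m S.
  rewrite /Y !mulmxDl !mulmxDr !mulmxN !mulmxA z1 z2 z3 e1 i1 !mul0mx !addr0 !oppr0 !add0r.
  by rewrite !addr0 [M *m S + _]addrCA subrr addr0.
have Yt : Y^T = Y.
  by rewrite /Y !raddfD raddfN /= !trmx_mul !trmxK Ms mulmxA [S^T + S]addrC.
have YA : Y *m (M + B + B^T) = I + B^T *m S.
  rewrite -{1}Yt.
  have -> : M + B + B^T = (M + B + B^T)^T by rewrite !raddfD /= trmxK Ms addrAC.
  by rewrite -trmx_mul AY raddfD /= trmx_mul trmxK Is e3.
split.
- rewrite AY !mulmxDl !mulmxDr i1 i2 z7 -!mulmxA z5 z6 e2 i4 !mulmx0.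
  by rewrite addr0 !add0r.
- rewrite -mulmxA AY !mulmxDr.
  rewrite /Y !mulmxDl !mulNmx -!mulmxA z4 i5 !(mulmxA S (B^T)) e2 i3.
  rewrite (mulmxA (S^T) (B^T)) z8 mul0mx !mulmx0 oppr0 !addr0.
  by rewrite add0r addrA [S^T + S]addrC.
- by rewrite AY YA.
Qed.

Lemma ginv_unique (R : ringType) n (A X Y : 'M[R]_n) :
  is_group_inverse A X -> is_group_inverse A Y -> X = Y.
Proof.
move=> [h1 h2 h3] [k1 k2 k3].
have XXA : X *m X *m A = X by rewrite -mulmxA -h3 mulmxA h2.
have AYA : A = A *m A *m Y by rewrite -{1}k1 -mulmxA -k3 mulmxA.
have AYY : A *m Y *m Y = Y by rewrite k3 k2.
have AXA : A = X *m A *m A by rewrite -{1}h1 h3.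
have eX : X = X *m A *m Y by rewrite -{1}XXA {1}AYA !mulmxA XXA.
have eY : Y = X *m A *m Y.
  by rewrite -{1}AYY {1}AXA -!mulmxA (mulmxA A Y Y) AYY.
by rewrite eX -eY.
Qed.

Definition core (R : realFieldType) n (A : 'M[R]_n) i := ~~ pendant (adjm A) i.
Definition Bm (R : realFieldType) n (A : 'M[R]_n) : 'M[R]_n :=
  \matrix_(i, j) if core A i && ~~ core A j then A i j else 0.
Definition Mm (R : realFieldType) n (A : 'M[R]_n) : 'M[R]_n :=
  \matrix_(i, j) if core A i && core A j then A i j else 0.
Definition dd (R : realFieldType) n (A : 'M[R]_n) i := \sum_j Bm A i j ^+ 2.
Definition Sm (R : realFieldType) n (A : 'M[R]_n) : 'M[R]_n :=
  \matrix_(i, j) (Bm A i j / dd A i).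
Definition Icm (R : realFieldType) n (A : 'M[R]_n) : 'M[R]_n :=
  \matrix_(i, j) ((i == j) && core A i)%:R.

Lemma symE (R : realFieldType) n (A : 'M[R]_n) i j : A^T = A -> A i j = A j i.
Proof. by move=> h; rewrite -{1}h mxE. Qed.

Lemma adjm_sym (R : realFieldType) n (A : 'M[R]_n) i j : A^T = A -> adjm A i j = adjm A j i.
Proof. by move=> h; rewrite /adjm eq_sym (symE _ _ h). Qed.

Lemma pend_unique (R : realFieldType) n (A : 'M[R]_n) p a b :
  pendant (adjm A) p -> adjm A p a -> adjm A p b -> a = b.
Proof.
rewrite /pendant /deg => /cards1P [x hx] ha hb.
have : a \in [set u | adjm A p u] by rewrite inE.
have : b \in [set u | adjm A p u] by rewrite inE.
by rewrite hx !inE => /eqP -> /eqP ->.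
Qed.

Lemma pend_pend0 (R : realFieldType) n (A : 'M[R]_n) p q :
  in_class_T A -> pendant (adjm A) p -> pendant (adjm A) q -> A p q = 0.
Proof.
move=> [[hs hd hc _] [c hcp] _] pp pq.
case: (eqVneq p q) => [-> | npq]; first exact: hd.
apply/eqP; apply: contraT => Apq.
have epq : adjm A p q by rewrite /adjm npq Apq.
have eqp : adjm A q p by rewrite adjm_sym.
have cl : forall a b, a \in [set p; q] -> adjm A a b -> b \in [set p; q].
  move=> a b; rewrite !inE => /orP [] /eqP -> e.
  - by rewrite (pend_unique pp e epq) eqxx orbT.
  - by rewrite (pend_unique pq e eqp) eqxx.
have := closed_connect_lem (S := mem [set p; q]) cl _ (hc p c).
rewrite !inE eqxx => /(_ isT) /orP [] /eqP ec; by move: hcp; rewrite ec ?pp ?pq.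
Qed.

Lemma Adec (R : realFieldType) n (A : 'M[R]_n) :
  in_class_T A -> A = Mm A + Bm A + (Bm A)^T.
Proof.
move=> hT; have [[hs _ _ _] _ _] := hT.
apply/matrixP=> i j; rewrite !mxE.
case ci: (core A i); case cj: (core A j) => /=; rewrite ?addr0 ?add0r //.
- exact: symE.
- by move: ci cj => /negbFE ci /negbFE cj; rewrite (pend_pend0 hT ci cj).
Qed.

Lemma mul_supp0 (R : realFieldType) n (X Y : 'M[R]_n) (P : pred 'I_n) :
  (forall i k, X i k != 0 -> P k) -> (forall k j, Y k j != 0 -> ~~ P k) -> X *m Y = 0.
Proof.
move=> hX hY; apply/matrixP=> i j; rewrite !mxE big1 // => k _.
have [->|/hX Pk] := eqVneq (X i k) 0; first by rewrite mul0r.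
have [->|/hY] := eqVneq (Y k j) 0; first by rewrite mulr0.
by rewrite Pk.
Qed.


Lemma BsuppL (R : realFieldType) n (A : 'M[R]_n) i j : Bm A i j != 0 -> core A i.
Proof. by rewrite mxE; case: ifP => [/andP [] | _ ] //; rewrite eqxx. Qed.
Lemma BsuppR (R : realFieldType) n (A : 'M[R]_n) i j : Bm A i j != 0 -> ~~ core A j.
Proof. by rewrite mxE; case: ifP => [/andP [] | _ ] //; rewrite eqxx. Qed.
Lemma SsuppB (R : realFieldType) n (A : 'M[R]_n) i j : Sm A i j != 0 -> Bm A i j != 0.
Proof. by rewrite mxE; apply: contra => /eqP ->; rewrite mul0r. Qed.
Lemma SsuppL (R : realFieldType) n (A : 'M[R]_n) i j : Sm A i j != 0 -> core A i.
Proof. by move/SsuppB/BsuppL. Qed.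
Lemma SsuppR (R : realFieldType) n (A : 'M[R]_n) i j : Sm A i j != 0 -> ~~ core A j.
Proof. by move/SsuppB/BsuppR. Qed.
Lemma MsuppL (R : realFieldType) n (A : 'M[R]_n) i j : Mm A i j != 0 -> core A i.
Proof. by rewrite mxE; case: ifP => [/andP [] | _ ] //; rewrite eqxx. Qed.
Lemma MsuppR (R : realFieldType) n (A : 'M[R]_n) i j : Mm A i j != 0 -> core A j.
Proof. by rewrite mxE; case: ifP => [/andP [] | _ ] //; rewrite eqxx. Qed.
Lemma IsuppL (R : realFieldType) n (A : 'M[R]_n) i j : Icm A i j != 0 -> core A i.
Proof. by rewrite mxE; case: (core A i); rewrite ?andbF ?eqxx. Qed.
Lemma IsuppR (R : realFieldType) n (A : 'M[R]_n) i j : Icm A i j != 0 -> core A j.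
Proof.
rewrite mxE; case: (eqVneq i j) => [-> | _] /=; last by rewrite eqxx.
by case: (core A j); rewrite ?eqxx.
Qed.

Lemma IcmL (R : realFieldType) n (A X : 'M[R]_n) :
  (forall i k, X i k != 0 -> core A i) -> Icm A *m X = X.
Proof.
move=> hX; apply/matrixP=> i j; rewrite !mxE (bigD1 i) //= big1 => [|k /negbTE nk]; last first.
  by rewrite mxE eq_sym nk mul0r.
rewrite mxE eqxx /= addr0; case: (boolP (core A i)) => ci; first by rewrite mul1r.
by rewrite mul0r; apply/esym/eqP; exact: (contraNT (hX i j)).
Qed.

Lemma IcmR (R : realFieldType) n (A X : 'M[R]_n) :
  (forall i k, X i k != 0 -> core A k) -> X *m Icm A = X.
Proof.
move=> hX; apply/matrixP=> i j; rewrite !mxE (bigD1 j) //= big1 => [|k /negbTE nk]; last first.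
  by rewrite mxE nk mulr0.
rewrite mxE eqxx /= addr0; case: (boolP (core A j)) => cj; first by rewrite mulr1.
by rewrite mulr0; apply/esym/eqP; exact: (contraNT (hX i j)).
Qed.

Lemma dd_neq0 (R : realFieldType) n (A : 'M[R]_n) i :
  in_class_T A -> core A i -> dd A i != 0.
Proof.
move=> [_ _ hp] ci; have [u /andP [aiu pu]] := hp i ci.
rewrite /dd psumr_eq0 => [|k _]; last exact: sqr_ge0.
apply/allPn; exists u; first by rewrite mem_index_enum.
rewrite /= mxE ci /core pu /= sqrf_eq0.
by move: aiu; rewrite /adjm => /andP [].
Qed.

Lemma B_par (R : realFieldType) n (A : 'M[R]_n) i j k :
  in_class_T A -> Bm A i k != 0 -> Bm A j k != 0 -> i = j.
Proof.
move=> [[hs _ _ _] _ _] hi hj.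
have pk : pendant (adjm A) k by have := BsuppR hi; rewrite /core negbK.
have adj : forall a, Bm A a k != 0 -> adjm A k a.
  move=> a; rewrite mxE; case: ifP => [/andP [ca _] h| _]; last by rewrite eqxx.
  rewrite /adjm (symE _ _ hs) h andbT; apply/eqP => eka.
  by move: ca; rewrite -eka /core pk.
exact: pend_unique pk (adj i hi) (adj j hj).
Qed.

Lemma It_eq (R : realFieldType) n (A : 'M[R]_n) : (Icm A)^T = Icm A.
Proof.
apply/matrixP=> i j; rewrite !mxE.
by case: (eqVneq i j) => [-> | nij]; rewrite ?eqxx // eq_sym (negbTE nij).
Qed.

Lemma BSt (R : realFieldType) n (A : 'M[R]_n) :
  in_class_T A -> Bm A *m (Sm A)^T = Icm A.
Proof.
move=> hT; apply/matrixP => i j; rewrite mxE [RHS]mxE.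
have e : forall k, (Sm A)^T k j = Bm A j k / dd A j by move=> k; rewrite !mxE.
under eq_bigr => k _ do rewrite e.
case: (eqVneq i j) => [<- | nij].
- under eq_bigr => k _ do rewrite mulrA.
  rewrite -mulr_suml /=.
  case: (boolP (core A i)) => ci.
    rewrite (_ : \sum_k Bm A i k * Bm A i k = dd A i) ?mulfV ?dd_neq0 //.
  rewrite big1 ?mul0r // => k _.
  have -> : Bm A i k = 0 by apply/eqP; apply: contraNT ci => /BsuppL.
  by rewrite mul0r.
- rewrite /= big1 // => k _.
  have [->|hi] := eqVneq (Bm A i k) 0; first by rewrite mul0r.
  have [->|hj] := eqVneq (Bm A j k) 0; first by rewrite mul0r mulr0.
  by move: nij; rewrite (B_par hT hi hj) eqxx.
Qed.

Lemma Ym_ginv (R : realFieldType) n (A : 'M[R]_n) :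
  in_class_T A ->
  is_group_inverse A (Sm A + (Sm A)^T - (Sm A)^T *m Mm A *m Sm A).
Proof.
move=> hT; have [[hs _ _ _] _ _] := hT.
have bst := BSt hT.
apply: alg_ginv.
- exact: Adec.
- by apply/matrixP=> i j; rewrite !mxE andbC (symE _ _ hs).
- exact: It_eq.
- apply: (mul_supp0 (P := core A)) => [i k /MsuppR //|k j]; rewrite mxE => /SsuppR //.
- apply: (mul_supp0 (P := fun k => ~~ core A k)) => [i k /BsuppR //|k j /SsuppL]; by rewrite negbK.
- apply: (mul_supp0 (P := core A)) => [i k|k j]; rewrite mxE; [by move/BsuppL | by move/SsuppR].
- apply: (mul_supp0 (P := fun k => ~~ core A k)) => [i k /SsuppR //|k j /IsuppL]; by rewrite negbK.
- apply: (mul_supp0 (P := fun k => ~~ core A k)) => [i k /SsuppR //|k j /MsuppL]; by rewrite negbK.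
- apply: (mul_supp0 (P := fun k => ~~ core A k)) => [i k /SsuppR //|k j /BsuppL]; by rewrite negbK.
- apply: (mul_supp0 (P := core A)) => [i k /IsuppR //|k j]; rewrite mxE => /BsuppR //.
- apply: (mul_supp0 (P := core A)) => [i k|k j]; rewrite mxE; [by move/SsuppL | by move/BsuppR].
- by apply: IcmL => i k /MsuppL.
- by apply: IcmL => i k /BsuppL.
- by apply: IcmL => i k /SsuppL.
- by apply: IcmR => i k; rewrite mxE => /BsuppL.
- by apply: IcmR => i k; rewrite mxE => /SsuppL.
- exact: bst.
- by have := congr1 trmx bst; rewrite trmx_mul trmxK It_eq.
- apply/matrixP=> i j; rewrite !mxE; apply: eq_bigr => k _; rewrite !mxE.
  by rewrite mulrAC mulrA.
Qed.

Definition Ym (R : realFieldType) n (A : 'M[R]_n) : 'M[R]_n :=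
  Sm A + (Sm A)^T - (Sm A)^T *m Mm A *m Sm A.

Lemma YE (R : realFieldType) n (A : 'M[R]_n) i j :
  Ym A i j = Sm A i j + Sm A j i - \sum_l (\sum_k Sm A k i * Mm A k l) * Sm A l j.
Proof.
rewrite /Ym !mxE; congr (_ + _ - _); apply: eq_bigr => l _; rewrite !mxE.
by congr (_ * _); apply: eq_bigr => k _; rewrite mxE.
Qed.

Lemma Y_core (R : realFieldType) n (A : 'M[R]_n) v u :
  core A v -> Ym A v u = Sm A v u /\ Ym A u v = Sm A v u.
Proof.
move=> cv.
have S0 : forall w, Sm A w v = 0 by move=> w; apply/eqP; apply: contraTT cv => /SsuppR.
split; rewrite YE S0.
- rewrite addr0 big1 ?subr0 // => l _; rewrite big1 ?mul0r // => k _.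
  by rewrite S0 mul0r.
- rewrite add0r big1 ?subr0 // => l _; by rewrite S0 mulr0.
Qed.

Lemma Y_pp (R : realFieldType) n (A : 'M[R]_n) a b p q :
  in_class_T A -> Bm A a p != 0 -> Bm A b q != 0 ->
  Ym A p q = - (Sm A a p * Mm A a b * Sm A b q).
Proof.
move=> hT hap hbq.
have np := BsuppR hap; have nq := BsuppR hbq.
have Sp : Sm A p q = 0 by apply/eqP; apply: contraNT np => /SsuppL.
have Sq : Sm A q p = 0 by apply/eqP; apply: contraNT nq => /SsuppL.
have Sk : forall k x c, Bm A c x != 0 -> k != c -> Sm A k x = 0.
  move=> k x c hc nkc; apply/eqP; apply: contraNT nkc => /SsuppB hk.
  by rewrite (B_par hT hk hc).
rewrite YE Sp Sq add0r sub0r; congr (- _).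
rewrite (bigD1 b) //= [X in _ + X]big1 ?addr0 => [|l nlb].
  rewrite (bigD1 a) //= [X in _ + X]big1 ?addr0 // => k nka.
  by rewrite (Sk k p a hap nka) mul0r.
by rewrite (Sk l q b hbq nlb) mulr0.
Qed.

Lemma BmE (R : realFieldType) n (A : 'M[R]_n) i j :
  core A i -> ~~ core A j -> Bm A i j = A i j.
Proof. by move=> ci cj; rewrite mxE ci cj. Qed.

Lemma MmE (R : realFieldType) n (A : 'M[R]_n) i j :
  core A i -> core A j -> Mm A i j = A i j.
Proof. by move=> ci cj; rewrite mxE ci cj. Qed.

Lemma Sm_neq0 (R : realFieldType) n (A : 'M[R]_n) i j :
  in_class_T A -> core A i -> Bm A i j != 0 -> Sm A i j != 0.
Proof.
by move=> hT ci h; rewrite mxE mulf_neq0 // invr_neq0 // dd_neq0.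
Qed.

Lemma Y_core_nz (R : realFieldType) n (A : 'M[R]_n) v u :
  in_class_T A -> core A v -> (Ym A v u != 0) = (~~ core A u && (A v u != 0)).
Proof.
move=> hT cv; have [-> _] := Y_core u cv.
case: (boolP (core A u)) => cu /=.
  by rewrite !mxE cv cu /= mul0r eqxx.
rewrite mxE (BmE cv cu); apply/idP/idP; first by apply: contra => /eqP ->; rewrite mul0r.
by move=> h; rewrite mulf_neq0 // invr_neq0 // dd_neq0.
Qed.

Lemma cycle4E (T : eqType) (e : rel T) a b c d :
  cycle e [:: a; b; c; d] = [&& e a b, e b c, e c d & e d a].
Proof. by rewrite /= andbT. Qed.

Theorem corollary3p7 (R : realFieldType) (n : nat) (A X : 'M[R]_n) :
  in_class_T A -> is_group_inverse A X ->
  (forall v : 'I_n, ~~ pendant (adjm A) v ->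
     deg (adjm X) v = #|[set u | adjm A v u && pendant (adjm A) u]|) /\
  (~ is_star A -> ~ is_corona A -> has_cycle4 (adjm X)).
Proof.
move=> hT hX.
have eX : X = Ym A := ginv_unique hX (Ym_ginv hT).
subst X.
have [[hs hd hc _] [c0 hc0] hp] := hT.
split.
  move=> v cv; rewrite /deg; apply: eq_card => u; rewrite !inE /adjm.
  rewrite (Y_core_nz u hT cv) /core negbK.
  by case: (v != u); case: (pendant _ u); case: (A v u != 0).
move=> nstar ncor.
have /existsP [u /andP [cu]] : [exists u, core A u &&
    (1 < #|[set v | adjm A u v & ~~ core A v]|)%N].
  apply: contraT => /existsPn hne; exfalso; apply: ncor.
  exists [set x | core A x]; split.
  - by apply/set0Pn; exists c0; rewrite inE.
  - move=> v; rewrite inE => /negbNE pv; split => // w avw; rewrite inE.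
    apply: contraT => /negbNE pw.
    by move: avw; rewrite /adjm (pend_pend0 hT pv pw) eqxx andbF.
  - move=> w; rewrite inE => cw.
    have := hne w; rewrite cw /= -leqNgt => h1.
    have h0 : (0 < #|[set v | adjm A w v & v \notin [set x | core A x]]|)%N.
      have [q /andP [awq pq]] := hp w cw.
      by apply/card_gt0P; exists q; rewrite !inE awq /core pq.
    apply/eqP; rewrite eqn_leq h0 andbT.
    by apply: leq_trans h1; apply: subset_leq_card; apply/subsetP => x; rewrite !inE.
move=> /card_gt1P [p1 [p2 []]]; rewrite !inE => /andP [aup1 cp1] /andP [aup2 cp2] np12.
have /existsP [w /andP [auw cw]] : [exists w, adjm A u w && core A w].
  apply: contraT => /existsPn hnw; exfalso; apply: nstar; exists u => v nvu.
  have cl : forall a b, (a == u) || adjm A u a -> adjm A a b -> (b == u) || adjm A u b.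
    move=> a b /orP [/eqP -> -> | aua aab]; first by rewrite orbT.
    have pa : pendant (adjm A) a by have := hnw a; rewrite aua /= /core negbK.
    have aau : adjm A a u by rewrite adjm_sym.
    by rewrite (pend_unique pa aab aau) eqxx.
  have := closed_connect_lem (S := fun x => (x == u) || adjm A u x) cl _ (hc u v).
  by rewrite eqxx => /(_ isT) /orP [/eqP evu|//]; move: nvu; rewrite evu eqxx.
have [q /andP [awq pq]] := hp w cw.
have cq : ~~ core A q by rewrite /core pq.
have Aup1 : A u p1 != 0 by move: aup1; rewrite /adjm => /andP [].
have Aup2 : A u p2 != 0 by move: aup2; rewrite /adjm => /andP [].
have Awq : A w q != 0 by move: awq; rewrite /adjm => /andP [].
have Auw : A u w != 0 by move: auw; rewrite /adjm => /andP [].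
have B1 : Bm A u p1 != 0 by rewrite BmE.
have B2 : Bm A u p2 != 0 by rewrite BmE.
have Bq : Bm A w q != 0 by rewrite BmE.
have nuw : u != w by move: auw; rewrite /adjm => /andP [].
have neq : forall p, Bm A u p != 0 -> p != q.
  move=> p hp'; apply/eqP => epq; move: nuw; rewrite (B_par hT hp' (_ : Bm A w p != 0)) ?eqxx //.
  by rewrite epq.
have ncore : forall p, ~~ core A p -> u != p.
  by move=> p cp; apply/eqP => e; move: cu; rewrite e (negbTE cp).
have pp : forall a b p p', Bm A a p != 0 -> Bm A b p' != 0 -> core A a -> core A b ->
    A a b != 0 -> Ym A p p' != 0.
  move=> a b p p' hap hbp' ca cb Aab.
  rewrite (Y_pp hT hap hbp') oppr_eq0 !mulf_neq0 ?Sm_neq0 //.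
  by rewrite MmE.
exists [:: u; p1; q; p2]; split; first by [].
- rewrite /= !inE !negb_or (ncore _ cp1) (ncore _ cq) (ncore _ cp2) np12 (neq _ B1) /=.
  by rewrite eq_sym (neq _ B2).
- rewrite cycle4E /adjm (ncore _ cp1) (Y_core_nz _ hT cu) cp1 Aup1 !andTb.
  rewrite (neq _ B1) (pp _ _ _ _ B1 Bq cu cw Auw) !andTb.
  have Awu : A w u != 0 by rewrite (symE _ _ hs).
  rewrite eq_sym (neq _ B2) (pp _ _ _ _ Bq B2 cw cu Awu) !andTb.
  rewrite eq_sym (ncore _ cp2) andTb.
  have [_ ->] := Y_core p2 cu.
  by rewrite Sm_neq0.
Qed.
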